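(* Let $\mathbb X$ be a basic space and $\mathcal D=(D,<,\rho)$ a computable partially ordered set. 1. Every $F\in\mathrm{Max}_{\mathrm{PR}}[\mathbb X\to\mathcal D]$ is of the form $F=\max^{\mathcal D}f$ for some partial computable $f:\mathbb X\times\mathbb N\to D$, monotone increasing in its second argument, such that $\mathrm{dom}(f)=Z\times\mathbb N$ for some $\Sigma^0_1$ (computably enumerable) set $Z\subseteq\mathbb X$. 2. If moreover $F\in\mathrm{Max}_{\mathrm{PR}}[\mathbb X\to\mathcal D]$ has $\Sigma^0_1$ domain, then one can take $Z=\mathrm{dom}(F)$.
   Context: A basic space is a finite non-empty product of sets each of which is $\mathbb N$, $\mathbb Z$, or $A^*$ for some finite alphabet $A$. A computable partially ordered set is a triple $\mathcal D=(D,<,\rho)$ where $\rho:\mathbb N\to D$ is a bijection and $<$ is a strict partial order on $D$ with $\{(m,n):\rho(m)<\rho(n)\}$ computable; a partial function into $D$ is partial computable if its composition with $\rho^{-1}$ is. For a partial $f:\mathbb X\times\mathbb N\to D$ monotone increasing in its second argument on its domain, $\max^{\mathcal D}f$ is the partial function defined exactly at those $x$ for which $\{f(x,t):t,\ f(x,t)\text{ defined}\}$ is finite and non-empty, with value its maximum element. $\mathrm{Max}_{\mathrm{PR}}[\mathbb X\to\mathcal D]$ is the class of all $\max^{\mathcal D}f$ with $f$ partial computable and monotone increasing in its second argument. *)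

(* Defs.v *)
From mathcomp Require Import all_boot ssralg ssrint.
Set Implicit Arguments. Unset Strict Implicit. Unset Printing Implicit Defensive.

Inductive rec : Type :=
| rZero | rSucc | rProj (i : nat) | rComp (f : rec) (gs : list rec)
| rPrim (f g : rec) | rMu (f : rec).

Inductive eval : rec -> list nat -> nat -> Prop :=
| eZero xs : eval rZero xs 0
| eSucc x xs : eval rSucc (x :: xs) x.+1
| eProj i xs : eval (rProj i) xs (nth 0 xs i)
| eComp f gs xs ys v : evals gs xs ys -> eval f ys v -> eval (rComp f gs) xs v
| ePrim0 f g xs v : eval f xs v -> eval (rPrim f g) (0 :: xs) v
| ePrimS f g n xs w v : eval (rPrim f g) (n :: xs) w ->
    eval g (n :: w :: xs) v -> eval (rPrim f g) (n.+1 :: xs) v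
| eMu f xs n : eval f (n :: xs) 0 ->
    (forall m, m < n -> exists k, eval f (m :: xs) k.+1) -> eval (rMu f) xs n
with evals : list rec -> list nat -> list nat -> Prop :=
| esNil xs : evals [::] xs [::]
| esCons g gs xs y ys : eval g xs y -> evals gs xs ys -> evals (g :: gs) xs (y :: ys).

(* basic spaces: finite non-empty products of N, Z, A^* (A finite)    *)
Inductive bcomp := CN | CZ | CW (k : nat).

Definition ctype (c : bcomp) : Type :=
  match c with CN => nat | CZ => int | CW k => seq 'I_k end.

Definition cantor (a b : nat) : nat := (a + b) * (a + b).+1 %/ 2 + b.

Definition code_int (z : int) : nat :=
  match z with Posz n => n.*2 | Negz n => n.*2.+1 end.

(* bijective base-k numeration *)
Fixpoint code_word k (w : seq 'I_k) : nat :=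
  match w with [::] => 0 | a :: w' => (nat_of_ord a).+1 + k * code_word w' end.

Definition ccode (c : bcomp) : ctype c -> nat :=
  match c return ctype c -> nat with
  | CN => fun n => n | CZ => code_int | CW k => @code_word k end.

Fixpoint btype (c : bcomp) (cs : seq bcomp) : Type :=
  match cs with [::] => ctype c | c' :: cs' => (ctype c * btype c' cs')%type end.

Fixpoint bcode (c : bcomp) (cs : seq bcomp) : btype c cs -> nat :=
  match cs return btype c cs -> nat with
  | [::] => ccode (c := c)
  | c' :: cs' => fun x => cantor (ccode x.1) (bcode x.2)
  end.

Definition is_comp_poset (D : Type) (lt : D -> D -> Prop) (rho : nat -> D) : Prop :=
  [/\ (forall x, ~ lt x x),
      (forall x y z, lt x y -> lt y z -> lt x z),
      bijective rho &
      exists p : rec, forall m n,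
        (eval p [:: m; n] 1 <-> lt (rho m) (rho n)) /\
        (eval p [:: m; n] 0 <-> ~ lt (rho m) (rho n))].

Definition leD (D : Type) (lt : D -> D -> Prop) (x y : D) : Prop := lt x y \/ x = y.

(* propositional list membership (D has no decidable equality) *)
Fixpoint inl (D : Type) (e : D) (l : list D) : Prop :=
  match l with [::] => False | a :: l' => a = e \/ inl e l' end.

(* partial functions are modelled as option-valued functions *)
Section Comp.
Variables (c : bcomp) (cs : seq bcomp) (D : Type) (lt : D -> D -> Prop) (rho : nat -> D).
Local Notation X := (btype c cs).

Definition pcomp2 (f : X -> nat -> option D) : Prop :=
  exists p : rec, forall x t n, eval p [:: bcode x; t] n <-> f x t = Some (rho n).

Definition sigma01 (Z : X -> Prop) : Prop :=
  exists p : rec, forall x, Z x <-> exists v, eval p [:: bcode x] v.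

Definition mono2 (f : X -> nat -> option D) : Prop :=
  forall x t t' d d', t <= t' -> f x t = Some d -> f x t' = Some d' -> leD lt d d'.

Definition vals (f : X -> nat -> option D) (x : X) (d : D) : Prop :=
  exists t, f x t = Some d.

Definition is_maxD (f : X -> nat -> option D) (F : X -> option D) : Prop :=
  forall x d, F x = Some d <->
    [/\ exists l : list D, forall e, vals f x e -> inl e l,
        vals f x d &
        forall e, vals f x e -> leD lt e d].

Definition MaxPR (F : X -> option D) : Prop :=
  exists f, [/\ pcomp2 f, mono2 f & is_maxD f F].
End Comp.

(* Main.v *)
Require Import Defs.
From mathcomp Require Import all_boot ssralg ssrint.
Set Implicit Arguments. Unset Strict Implicit. Unset Printing Implicit Defensive.

Fixpoint AllR (Q : rec -> Prop) (gs : list rec) : Prop :=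
  match gs with [::] => True | g :: gs => Q g /\ AllR Q gs end.

Section RecInd.
Variable P : rec -> Prop.
Hypotheses (H0 : P rZero) (HS : P rSucc) (HP : forall i, P (rProj i))
  (HC : forall f gs, P f -> AllR P gs -> P (rComp f gs))
  (HPr : forall f g, P f -> P g -> P (rPrim f g))
  (HM : forall f, P f -> P (rMu f)).
Fixpoint rec_ind2 (p : rec) : P p :=
  match p with
  | rZero => H0 | rSucc => HS | rProj i => HP i
  | rComp f gs => HC (rec_ind2 f)
      ((fix go gs : AllR P gs := match gs with [::] => I | g :: gs => conj (rec_ind2 g) (go gs) end) gs)
  | rPrim f g => HPr (rec_ind2 f) (rec_ind2 g)
  | rMu f => HM (rec_ind2 f) end.
End RecInd.


Lemma inv_zero xs v : eval rZero xs v -> v = 0.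
Proof. by move=> H; inversion H. Qed.
Lemma inv_succ xs v : eval rSucc xs v -> exists x xs', xs = x :: xs' /\ v = x.+1.
Proof. by move=> H; inversion H; eauto. Qed.
Lemma inv_proj i xs v : eval (rProj i) xs v -> v = nth 0 xs i.
Proof. by move=> H; inversion H. Qed.
Lemma inv_comp f gs xs v : eval (rComp f gs) xs v -> exists ys, evals gs xs ys /\ eval f ys v.
Proof. by move=> H; inversion H; eauto. Qed.
Lemma inv_prim_nil f g v : eval (rPrim f g) [::] v -> False.
Proof. by move=> H; inversion H. Qed.
Lemma inv_prim0 f g xs v : eval (rPrim f g) (0 :: xs) v -> eval f xs v.
Proof. by move=> H; inversion H. Qed.
Lemma inv_primS f g n xs v : eval (rPrim f g) (n.+1 :: xs) v ->
  exists w, eval (rPrim f g) (n :: xs) w /\ eval g (n :: w :: xs) v.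
Proof. by move=> H; inversion H; eauto. Qed.
Lemma inv_mu f xs n : eval (rMu f) xs n ->
  eval f (n :: xs) 0 /\ (forall m, m < n -> exists k, eval f (m :: xs) k.+1).
Proof. by move=> H; inversion H. Qed.
Lemma inv_evals_nil xs ys : evals [::] xs ys -> ys = [::].
Proof. by move=> H; inversion H. Qed.
Lemma inv_evals_cons g gs xs ys : evals (g :: gs) xs ys ->
  exists y ys', ys = y :: ys' /\ eval g xs y /\ evals gs xs ys'.
Proof. by move=> H; inversion H; eauto 6. Qed.

Lemma eval_det p : forall xs v w, eval p xs v -> eval p xs w -> v = w.
Proof.
elim/rec_ind2: p.
- by move=> xs v w /inv_zero -> /inv_zero ->.
- by move=> xs v w /inv_succ [x [xs' [-> ->]]] /inv_succ [y [ys [[-> _] ->]]].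
- by move=> i xs v w /inv_proj -> /inv_proj ->.
- move=> f gs IHf IHg xs v w /inv_comp [ys [E1 H1]] /inv_comp [ys0 [E2 H2]].
  suff E : ys = ys0 by subst; exact: IHf H1 H2.
  elim: gs IHg ys ys0 E1 E2 {H1 H2} => [|g gs IH] /= IHg ys ys0 E1 E2.
    by rewrite (inv_evals_nil E1) (inv_evals_nil E2).
  case: IHg => Ig Igs.
  case/inv_evals_cons: E1 => y [ys' [-> [Hy Hys]]].
  case/inv_evals_cons: E2 => y0 [ys0' [-> [Hy0 Hys0]]].
  by rewrite (Ig _ _ _ Hy Hy0) (IH Igs _ _ Hys Hys0).
- move=> f g IHf IHg [|a xs] v w H1 H2; first by case: (inv_prim_nil H1).
  elim: a v w H1 H2 => [|a IH] v w H1 H2.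
    exact: IHf (inv_prim0 H1) (inv_prim0 H2).
  case/inv_primS: H1 => u [Hu Hv]; case/inv_primS: H2 => u' [Hu' Hw].
  have E := IH _ _ Hu Hu'; subst; exact: IHg Hv Hw.
- move=> f IHf xs v w /inv_mu [H0 H1] /inv_mu [H2 H3].
  case: (ltngtP v w) => // Hvw.
  + by case: (H3 _ Hvw) => k Hk; have := IHf _ _ _ H0 Hk.
  + by case: (H1 _ Hvw) => k Hk; have := IHf _ _ _ H2 Hk.
Qed.

Fixpoint allsome (l : seq (option nat)) : option (seq nat) :=
  match l with
  | [::] => Some [::]
  | o :: l' => match o, allsome l' with Some x, Some ys => Some (x :: ys) | _, _ => None end
  end.

Fixpoint iterp (F : option nat) (G : nat -> nat -> option nat) (a : nat) : option nat :=
  if a is j.+1 then obind (G j) (iterp F G j) else F.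

Definition mustep (h : nat -> option nat) (m s : nat) : nat :=
  if s is 0 then (match h m with None => 1 | Some 0 => m.+2 | Some _ => 0 end) else s.
Fixpoint mustate h k := if k is k'.+1 then mustep h k' (mustate h k') else 0.

Fixpoint run (k : nat) (p : rec) (xs : seq nat) {struct p} : option nat :=
  match p with
  | rZero => Some 0
  | rSucc => if xs is x :: _ then Some x.+1 else None
  | rProj i => Some (nth 0 xs i)
  | rComp f gs => obind (run k f) (allsome (map (fun g => run k g xs) gs))
  | rPrim f g => if xs is a :: xs' then
       iterp (run k f xs') (fun j w => run k g (j :: w :: xs')) a else None
  | rMu f => if mustate (fun m => run k f (m :: xs)) k is s.+2 then Some s else None
  end.

Definition muspec (h : nat -> option nat) v :=
  h v = Some 0 /\ forall m, m < v -> exists w, h m = Some w.+1.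

Lemma mustate0 h k : (forall m, m < k -> exists w, h m = Some w.+1) -> mustate h k = 0.
Proof.
elim: k => //= k IH Hk; rewrite IH; last by move=> m Hm; apply: Hk; exact: ltnW.
by case: (Hk k (ltnSn k)) => w; rewrite /mustep => ->.
Qed.

Lemma mustate_pos h k s : mustate h k = s.+1 -> forall k', k <= k' -> mustate h k' = s.+1.
Proof.
move=> Hs k' Hk; elim: k' Hk => [|k' IH]; first by rewrite leqn0 => /eqP E; subst.
rewrite leq_eqVlt => /orP [/eqP <- //|]; rewrite ltnS => /IH /= ->; done.
Qed.

Lemma mustate_spec h k v : mustate h k = v.+2 <-> (v < k /\ muspec h v).
Proof.
split.
- elim: k => //= k IH.
  case E: (mustate h k) => [|[|s]] /=; rewrite /mustep.
  + case Eh: (h k) => [[|w]|] // [<-]; split=> //; split=> // m Hm.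
    elim: k E Hm {IH Eh} => // k IH2 /=.
    case E2: (mustate h k) => [|[|s]] //=; rewrite /mustep.
    case Eh: (h k) => [[|w]|] // _ Hm.
    move: Hm; rewrite ltnS leq_eqVlt => /orP [/eqP ->|Hm]; first by eauto.
    exact: IH2.
  + by [].
  + move=> Es; rewrite -Es in IH; case: (IH E) => H1 H2; split=> //; exact: ltnW.
- case=> Hv [Hh Hm].
  have E0 := mustate0 Hm.
  have E1 : mustate h v.+1 = v.+2 by rewrite /= E0 /mustep Hh.
  exact: (mustate_pos E1).
Qed.

Lemma allsome_cons o l ys : allsome (o :: l) = Some ys ->
  exists y ys', [/\ ys = y :: ys', o = Some y & allsome l = Some ys'].
Proof.
case: o => [y|] /=; last by [].
case: (allsome l) => [ys'|] //= E; exists y, ys'; split=> //; by case: E.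
Qed.


Lemma run_mono p : forall k k' xs v, k <= k' -> run k p xs = Some v -> run k' p xs = Some v.
Proof.
elim/rec_ind2: p => //.
- move=> f gs IHf IHg k k' xs v Hk /=.
  case E: (allsome _) => [ys|] //= Hf.
  suff -> : allsome (map (fun g => run k' g xs) gs) = Some ys by exact: IHf Hf.
  elim: gs IHg ys E {Hf} => [|g gs IH] /= IHg ys E; first by case: E => <-.
  case: IHg => Ig Igs; case/allsome_cons: E => y [ys' [-> Hy Hys]].
  by rewrite (Ig _ _ _ _ Hk Hy) (IH Igs _ Hys).
- move=> f g IHf IHg k k' [|a xs] v Hk //=.
  elim: a v => [|a IH] v /=; first exact: IHf.
  case E: (iterp _ _ a) => [w|] //= Hg.
  by rewrite (IH _ E) /=; apply: IHg Hk Hg.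
- move=> f IHf k k' xs v Hk /=.
  case E: (mustate _ k) => [|[|s]] // [<-].
  case/mustate_spec: E => Hs [H0 H1].
  suff -> : mustate (fun m => run k' f (m :: xs)) k' = s.+2 by [].
  apply/mustate_spec; split; first exact: leq_trans Hs Hk.
  split; first exact: IHf H0.
  move=> m Hm; case: (H1 m Hm) => w Hw; exists w; exact: IHf Hw.
Qed.

Lemma run_sound p : forall k xs v, run k p xs = Some v -> eval p xs v.
Proof.
elim/rec_ind2: p.
- by move=> k xs v [<-]; constructor.
- by move=> k [|x xs] v //= [<-]; constructor.
- by move=> i k xs v [<-]; constructor.
- move=> f gs IHf IHg k xs v /=.
  case E: (allsome _) => [ys|] //= Hf.
  apply: (eComp (ys := ys)); last exact: IHf Hf.
  elim: gs IHg ys E {Hf} => [|g gs IH] /= IHg ys E; first by case: E => <-; constructor.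
  case: IHg => Ig Igs; case/allsome_cons: E => y [ys' [-> Hy Hys]].
  constructor; [exact: Ig Hy | exact: IH].
- move=> f g IHf IHg k [|a xs] v //=.
  elim: a v => [|a IH] v /=; first by move=> H; constructor; exact: IHf H.
  case E: (iterp _ _ a) => [w|] //= Hg.
  apply: (ePrimS (w := w)); [exact: IH | exact: IHg Hg].
- move=> f IHf k xs v /=.
  case E: (mustate _ k) => [|[|s]] // [<-].
  case/mustate_spec: E => Hs [H0 H1].
  constructor; first exact: IHf H0.
  move=> m Hm; case: (H1 m Hm) => w Hw; exists w; exact: IHf Hw.
Qed.

Lemma allsome_mono gs k k' xs ys : k <= k' ->
  allsome (map (fun g => run k g xs) gs) = Some ys ->
  allsome (map (fun g => run k' g xs) gs) = Some ys.
Proof.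
move=> Hk; elim: gs ys => [|g gs IH] /= ys E; first by [].
case/allsome_cons: E => y [ys' [-> Hy Hys]].
by rewrite (run_mono Hk Hy) (IH _ Hys).
Qed.

Lemma unif_bound (P : nat -> nat -> Prop) v :
  (forall m k k', k <= k' -> P m k -> P m k') ->
  (forall m, m < v -> exists k, P m k) -> exists K, forall m, m < v -> P m K.
Proof.
move=> Hmono; elim: v => [|v IH] H; first by exists 0.
case: IH => [m Hm|K HK]; first by apply: H; exact: ltnW.
case: (H v (ltnSn v)) => k Hk; exists (maxn K k) => m.
rewrite ltnS leq_eqVlt => /orP [/eqP ->|Hm].
  by apply: Hmono Hk; exact: leq_maxr.
by apply: Hmono (HK m Hm); exact: leq_maxl.
Qed.

Lemma run_complete p : forall xs v, eval p xs v -> exists k, run k p xs = Some v.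
Proof.
elim/rec_ind2: p.
- by move=> xs v /inv_zero ->; exists 0.
- by move=> xs v /inv_succ [x [xs' [-> ->]]]; exists 0.
- by move=> i xs v /inv_proj ->; exists 0.
- move=> f gs IHf IHg xs v /inv_comp [ys [E H]].
  have [k1 Hk1] : exists k, allsome (map (fun g => run k g xs) gs) = Some ys.
    elim: gs IHg ys E {H} => [|g gs IH] /= IHg ys E.
      by rewrite (inv_evals_nil E); exists 0.
    case: IHg => Ig Igs; case/inv_evals_cons: E => y [ys' [-> [Hy Hys]]].
    case: (Ig _ _ Hy) => k1 Hk1; case: (IH Igs _ Hys) => k2 Hk2.
    exists (maxn k1 k2).
    by rewrite (run_mono (leq_maxl k1 k2) Hk1) /= (allsome_mono (leq_maxr k1 k2) Hk2).
  case: (IHf _ _ H) => k2 Hk2; exists (maxn k1 k2) => /=.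
  by rewrite (allsome_mono (leq_maxl k1 k2) Hk1) /= (run_mono (leq_maxr k1 k2) Hk2).
- move=> f g IHf IHg [|a xs] v H; first by case: (inv_prim_nil H).
  elim: a v H => [|a IH] v H.
    by case: (IHf _ _ (inv_prim0 H)) => k Hk; exists k.
  case/inv_primS: H => w [Hw Hv].
  case: (IH _ Hw) => k1 Hk1; case: (IHg _ _ Hv) => k2 Hk2.
  exists (maxn k1 k2) => /=.
  have := run_mono (leq_maxl k1 k2) Hk1 => /= ->; rewrite /=.
  exact: run_mono (leq_maxr k1 k2) Hk2.
- move=> f IHf xs v /inv_mu [H0 H1].
  case: (IHf _ _ H0) => k0 Hk0.
  have [K HK] : exists K, forall m, m < v -> exists w, run K f (m :: xs) = Some w.+1.
    apply: (unif_bound (P := fun m K => exists w, run K f (m :: xs) = Some w.+1)).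
      by move=> m k k' Hk [w Hw]; exists w; exact: run_mono Hk Hw.
    move=> m Hm; case: (H1 m Hm) => w Hw; case: (IHf _ _ Hw) => k Hk; eauto.
  pose k := maxn (maxn K k0) v.+1.
  exists k => /=.
  suff -> : mustate (fun m => run k f (m :: xs)) k = v.+2 by [].
  apply/mustate_spec; split; first exact: leq_maxr.
  split; first by apply: run_mono Hk0; rewrite /k; apply: leq_trans (leq_maxr K k0) (leq_maxl _ _).
  move=> m Hm; case: (HK m Hm) => w Hw; exists w; apply: run_mono Hw.
  by rewrite /k; apply: leq_trans (leq_maxl K k0) (leq_maxl _ _).
Qed.

Definition tot (p : rec) (F : seq nat -> nat) := forall xs, eval p xs (F xs).
Fixpoint tots (gs : seq rec) (Gs : seq (seq nat -> nat)) : Prop :=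
  match gs, Gs with
  | [::], [::] => True
  | g :: gs, G :: Gs => tot g G /\ tots gs Gs
  | _, _ => False end.

Lemma tots_evals gs Gs : tots gs Gs -> forall xs, evals gs xs (map (fun G => G xs) Gs).
Proof.
elim: gs Gs => [|g gs IH] [|G Gs] //=; first by move=> _ xs; constructor.
by case=> Hg Hgs xs; constructor; auto.
Qed.

Lemma tot_ext p F G : tot p F -> (forall xs, F xs = G xs) -> tot p G.
Proof. by move=> H E xs; rewrite -E. Qed.

Lemma tot_zero : tot rZero (fun _ => 0).
Proof. move=> xs; constructor. Qed.
Lemma tot_proj i : tot (rProj i) (fun xs => nth 0 xs i).
Proof. move=> xs; constructor. Qed.
Lemma tot_comp f F gs Gs : tot f F -> tots gs Gs ->
  tot (rComp f gs) (fun xs => F (map (fun G => G xs) Gs)).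
Proof. move=> Hf Hg xs; apply: eComp (tots_evals Hg xs) (Hf _). Qed.

Fixpoint primF (F G : seq nat -> nat) a xs :=
  if a is j.+1 then G (j :: primF F G j xs :: xs) else F xs.

Lemma eval_primF f g F G : tot f F -> tot g G ->
  forall a xs, eval (rPrim f g) (a :: xs) (primF F G a xs).
Proof.
move=> Hf Hg; elim=> [|a IH] xs /=; first by constructor.
apply: ePrimS (IH xs) (Hg _).
Qed.

Lemma tot_compP f g F G h hs H Hs : tot f F -> tot g G -> tot h H -> tots hs Hs ->
  tot (rComp (rPrim f g) (h :: hs)) (fun xs => primF F G (H xs) (map (fun G => G xs) Hs)).
Proof.
move=> Hf Hg Hh Hhs xs.
apply: (eComp (ys := H xs :: map (fun G => G xs) Hs)).
  by constructor; [exact: Hh | exact: tots_evals].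
exact: eval_primF.
Qed.

Definition S1 g := rComp rSucc [:: g].
Lemma tot_S1 g G : tot g G -> tot (S1 g) (fun xs => (G xs).+1).
Proof.
move=> Hg xs; apply: (eComp (ys := [:: G xs])); first by constructor; [exact: Hg|constructor].
constructor.
Qed.

Fixpoint cst n := if n is m.+1 then S1 (cst m) else rZero.
Lemma tot_cst n : tot (cst n) (fun _ => n).
Proof. elim: n => [|n IH] /=; [exact: tot_zero | exact: tot_S1]. Qed.

Definition guard c a := rComp (rPrim rZero (rProj 2)) [:: c; a].
Lemma tot_guard c a C A : tot c C -> tot a A ->
  tot (guard c a) (fun xs => if C xs is 0 then 0 else A xs).
Proof.
move=> Hc Ha; apply: tot_ext (tot_compP (hs := [:: a]) (Hs := [:: A]) tot_zero (tot_proj 2) Hc (conj Ha I)) _.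
by move=> xs /=; case: (C xs).
Qed.

Definition predc c := rComp (rPrim rZero (rProj 0)) [:: c].
Lemma tot_predc c C : tot c C -> tot (predc c) (fun xs => (C xs).-1).
Proof.
move=> Hc; apply: tot_ext (tot_compP (hs := [::]) (Hs := [::]) tot_zero (tot_proj 0) Hc I) _.
by move=> xs /=; case: (C xs).
Qed.

Definition ifz c a b := rComp (rPrim (rProj 0) (rProj 3)) [:: c; a; b].
Lemma tot_ifz c a b C A B : tot c C -> tot a A -> tot b B ->
  tot (ifz c a b) (fun xs => if C xs is 0 then A xs else B xs).
Proof.
move=> Hc Ha Hb; apply: tot_ext (tot_compP (hs := [:: a; b]) (Hs := [:: A; B]) (tot_proj 0) (tot_proj 3) Hc (conj Ha (conj Hb I))) _.
by move=> xs /=; case: (C xs).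
Qed.

Definition projs i n := [seq rProj j | j <- iota i n].
Definition pden i n (ys : seq nat) := [seq nth 0 ys j | j <- iota i n].
Lemma tots_projs i n : tots (projs i n) [seq (fun ys => nth 0 ys j) | j <- iota i n].
Proof. elim: n i => [|n IH] i //=; split; [exact: tot_proj | exact: IH]. Qed.
Lemma map_projs i n ys :
  map (fun G => G ys) [seq (fun ys => nth 0 ys j) | j <- iota i n] = pden i n ys.
Proof. by rewrite -map_comp. Qed.

Lemma pden_shift k xs i n : pden i.+1 n (k :: xs) = pden i n xs.
Proof. elim: n i => [|n IH] i //=; congr (_ :: _); exact: (IH i.+1). Qed.

Lemma pden_full xs : pden 0 (size xs) xs = xs.
Proof. by rewrite /pden -/(mkseq _ _) mkseq_nth. Qed.

Definition mkargs n ys := pden 1 n ys.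
Lemma mkargs_cons k xs n : size xs = n -> mkargs n (k :: xs) = xs.
Proof. by move=> <-; rewrite /mkargs pden_shift pden_full. Qed.
Lemma size_pden i n ys : size (pden i n ys) = n.
Proof. by rewrite size_map size_iota. Qed.
Lemma nth_pden i n ys j : nth 0 (pden i n ys) j = if j < n then nth 0 ys (i + j) else 0.
Proof.
case: ifP => Hj; first by rewrite (nth_map 0) ?size_iota // nth_iota.
by rewrite nth_default // size_pden leqNgt Hj.
Qed.

Definition enc (o : option nat) := if o is Some v then v.+1 else 0.
Definition den p n ys := enc (run (nth 0 ys 0) p (mkargs n ys)).

Definition guards cs body := foldr guard body cs.
Lemma tot_guards cs Cs body B : tots cs Cs -> tot body B ->
  tot (guards cs body) (fun ys => if all (fun C => C ys != 0) Cs then B ys else 0).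
Proof.
elim: cs Cs => [|c cs IH] [|C Cs] //=.
case=> Hc Hcs Hb; apply: tot_ext (tot_guard Hc (IH _ Hcs Hb)) _ => ys.
by case: (C ys).
Qed.

Lemma allsome_enc os : allsome os =
  if all (fun o => enc o != 0) os then Some (map (fun o => (enc o).-1) os) else None.
Proof.
elim: os => [|[v|] os IH] //=; rewrite IH; by case: (all _ _).
Qed.

Fixpoint Tr (p : rec) (n : nat) {struct p} : rec :=
  match p with
  | rZero => cst 1
  | rSucc => if n is _.+1 then S1 (S1 (rProj 1)) else rZero
  | rProj i => S1 (if i < n then rProj i.+1 else rZero)
  | rComp f gs => guards (map (fun g => Tr g n) gs)
        (rComp (Tr f (size gs)) (rProj 0 :: map (fun g => predc (Tr g n)) gs))
  | rPrim f g => if n is n'.+1 then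
        rComp (rPrim (Tr f n') (guard (rProj 1)
            (rComp (Tr g n'.+2) (rProj 2 :: rProj 0 :: predc (rProj 1) :: projs 3 n'))))
              (rProj 1 :: rProj 0 :: projs 2 n')
        else rZero
  | rMu f => let r := rComp (Tr f n.+1) (rProj 2 :: rProj 0 :: projs 3 n) in
             let X := ifz r (cst 1) (ifz (predc r) (S1 (S1 (rProj 0))) rZero) in
             let st := rComp (rPrim rZero (ifz (rProj 1) X (rProj 1)))
                             (rProj 0 :: rProj 0 :: projs 1 n) in
             predc (guard (predc st) st)
  end.

Lemma Tr_tot p : forall n, tot (Tr p n) (den p n).
Proof.
elim/rec_ind2: p.
- move=> n; apply: tot_ext (tot_cst 1) _ => ys; done.
- case=> [|n].
    by apply: tot_ext tot_zero _ => ys.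
  by apply: tot_ext (tot_S1 (tot_S1 (tot_proj 1))) _ => ys.
- move=> i n /=; case: ifP => Hi.
    apply: tot_ext (tot_S1 (tot_proj i.+1)) _ => ys.
    by rewrite /den /= /mkargs nth_pden Hi add1n.
  apply: tot_ext (tot_S1 tot_zero) _ => ys.
  by rewrite /den /= /mkargs nth_pden Hi.
- move=> f gs IHf IHg n /=.
  have Ha : tots (map (fun g => Tr g n) gs) (map (fun g => den g n) gs).
    by elim: gs IHg {IHf} => //= g gs IH [Ig Igs]; split; [exact: Ig | exact: IH].
  have Hb : tots (map (fun g => predc (Tr g n)) gs) (map (fun g ys => (den g n ys).-1) gs).
    elim: gs IHg {IHf Ha} => //= g gs IH [Ig Igs]; split; last exact: IH.
    exact: tot_predc (Ig n).
  have Hbody := tot_comp (IHf (size gs))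
     (gs := rProj 0 :: _) (Gs := (fun ys => nth 0 ys 0) :: _) (conj (tot_proj 0) Hb).
  apply: tot_ext (tot_guards Ha Hbody) _ => ys.
  rewrite /den /= allsome_enc all_map.
  have E1 : [seq G ys | G <- [seq (fun ys0 => (enc (run (nth 0 ys0 0) g (mkargs n ys0))).-1) | g <- gs]]
    = map (fun o => (enc o).-1) (map (fun g => run (nth 0 ys 0) g (mkargs n ys)) gs).
    by rewrite -!map_comp.
  have E2 : all (preim (fun g ys0 => enc (run (nth 0 ys0 0) g (mkargs n ys0))) (fun C => C ys != 0)) gs
    = all (fun o => enc o != 0) (map (fun g => run (nth 0 ys 0) g (mkargs n ys)) gs).
    by rewrite all_map.
  rewrite E1 E2 mkargs_cons ?size_map //.
  by case: ifP.
- move=> f g IHf IHg [|n'] /=.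
    by apply: tot_ext tot_zero _ => ys.
  have HG := tot_guard (tot_proj 1) (tot_comp (IHg n'.+2)
     (gs := rProj 2 :: rProj 0 :: predc (rProj 1) :: projs 3 n')
     (Gs := (fun zs => nth 0 zs 2) :: (fun zs => nth 0 zs 0) :: (fun zs => (nth 0 zs 1).-1)
             :: [seq (fun ys => nth 0 ys j) | j <- iota 3 n'])
     (conj (tot_proj 2) (conj (tot_proj 0) (conj (tot_predc (tot_proj 1)) (tots_projs 3 n'))))).
  have Ht := tot_compP (IHf n') HG (tot_proj 1) (hs := rProj 0 :: projs 2 n')
     (Hs := (fun zs => nth 0 zs 0) :: [seq (fun ys => nth 0 ys j) | j <- iota 2 n'])
     (conj (tot_proj 0) (tots_projs 2 n')).
  apply: tot_ext Ht _ => ys.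
  rewrite /= map_projs.
  have -> : den (rPrim f g) n'.+1 ys = enc (run (nth 0 ys 0) (rPrim f g) (nth 0 ys 1 :: pden 2 n' ys)) by [].
  have : size (pden 2 n' ys) = n' by rewrite size_pden.
  move: (pden 2 n' ys) (nth 0 ys 0) (nth 0 ys 1) => xs k a Hs /=.
  elim: a => [|a IH] /=.
    by rewrite /den /= mkargs_cons.
  rewrite map_projs !pden_shift (_ : 3 = 0 + 3) // -Hs pden_full Hs IH.
  case: (iterp _ _ a) => [w|] //=.
  by rewrite /den /= mkargs_cons //= Hs.
- move=> f IHf n /=.
  have Hr := tot_comp (IHf n.+1) (gs := rProj 2 :: rProj 0 :: projs 3 n)
    (Gs := (fun zs => nth 0 zs 2) :: (fun zs => nth 0 zs 0) :: [seq (fun ys => nth 0 ys j) | j <- iota 3 n])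
    (conj (tot_proj 2) (conj (tot_proj 0) (tots_projs 3 n))).
  have HX := tot_ifz Hr (tot_cst 1) (tot_ifz (tot_predc Hr) (tot_S1 (tot_S1 (tot_proj 0))) tot_zero).
  have HSTEP := tot_ifz (tot_proj 1) HX (tot_proj 1).
  have Hst := tot_compP tot_zero HSTEP (tot_proj 0) (hs := rProj 0 :: projs 1 n)
    (Hs := (fun zs => nth 0 zs 0) :: [seq (fun ys => nth 0 ys j) | j <- iota 1 n])
    (conj (tot_proj 0) (tots_projs 1 n)).
  apply: tot_ext (tot_predc (tot_guard (tot_predc Hst) Hst)) _ => ys.
  rewrite /= map_projs.
  have -> : den (rMu f) n ys = enc (run (nth 0 ys 0) (rMu f) (pden 1 n ys)) by [].
  have : size (pden 1 n ys) = n by rewrite size_pden.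
  move: (pden 1 n ys) (nth 0 ys 0) => xs k Hs /=.
  set h := (fun m => run k f (m :: xs)).
  set STEP := (X in primF _ X k _).
  have key : forall m, primF (fun _ => 0) STEP m (k :: xs) = mustate h m.
    elim=> [|m IH] //=.
    rewrite IH /STEP /=.
    case: (mustate h m) => [|s'] //=.
    rewrite map_projs !pden_shift -Hs pden_full Hs.
    rewrite /den /= mkargs_cons /h; last by rewrite /= Hs.
    by case: (run k f (m :: xs)) => [[|w]|].
  rewrite key.
  by case: (mustate h k) => [|[|s]].
Qed.

Fixpoint bestv (e : nat -> nat) (j : nat) :=
  if j is j'.+1 then (if e j' is 0 then bestv e j' else e j') else 0.

Lemma bestv_spec e j v : bestv e j = v.+1 ->
  exists s, [/\ s < j, e s = v.+1 & forall s', s < s' -> s' < j -> e s' = 0].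
Proof.
elim: j => //= j IH.
case E: (e j) => [|w].
  move=> /IH [s [H1 H2 H3]]; exists s; split=> //; first exact: ltnW.
  move=> s' Hs Hs'; move: Hs'; rewrite ltnS leq_eqVlt => /orP [/eqP -> //|]; exact: H3.
move=> Ew; exists j; split=> //; first by rewrite -Ew.
by move=> s' Hs Hs'; move: (leq_trans Hs Hs'); rewrite ltnn.
Qed.

Lemma bestv_pos e j s : e s != 0 -> s < j -> exists v, bestv e j = v.+1.
Proof.
move=> Hs; elim: j => // j IH /=; rewrite ltnS leq_eqVlt => /orP [/eqP <-|Hj].
  by case: (e s) Hs => // w _; eauto.
by case: (e j) => [|w]; [exact: IH | eauto].
Qed.

Section Top.
Variable p : rec.
Definition E k a s := enc (run k p [:: a; s]).
Definition gv a k := bestv (fun s => E k a s) k.+1.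

Lemma gbest a k v : gv a k = v.+1 -> exists s, [/\ s <= k, run k p [:: a; s] = Some v &
  forall s' w, s' <= k -> run k p [:: a; s'] = Some w -> s' <= s].
Proof.
case/bestv_spec => s [H1 H2 H3]; exists s; split=> //.
  by move: H2; rewrite /E; case: (run _ _ _) => // w [->].
move=> s' w Hs' Hw; rewrite leqNgt; apply/negP => Hlt.
by have := H3 s' Hlt Hs'; rewrite /E Hw.
Qed.

Lemma gpos a k s w : s <= k -> run k p [:: a; s] = Some w -> exists v, gv a k = v.+1.
Proof. by move=> Hs Hw; apply: (bestv_pos (s := s)) => //; rewrite /E Hw. Qed.

Definition Tp := Tr p 2.
Lemma tot_Tp : tot Tp (fun ys => E (nth 0 ys 0) (nth 0 ys 1) (nth 0 ys 2)).
Proof. apply: tot_ext (Tr_tot p 2) _ => ys; by rewrite /den /E. Qed.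

Definition Rg := rComp Tp [:: rProj 2; rProj 3; rProj 0].
Definition Gprog := rComp (rPrim rZero (ifz Rg (rProj 1) Rg)) [:: S1 (rProj 0); rProj 0; rProj 1].
Lemma tot_Gprog : tot Gprog (fun ys => gv (nth 0 ys 1) (nth 0 ys 0)).
Proof.
have HR := tot_comp tot_Tp (gs := [:: rProj 2; rProj 3; rProj 0])
  (Gs := [:: (fun zs => nth 0 zs 2); (fun zs => nth 0 zs 3); (fun zs => nth 0 zs 0)])
  (conj (tot_proj 2) (conj (tot_proj 3) (conj (tot_proj 0) I))).
have Ht := tot_compP (hs := [:: rProj 0; rProj 1]) (Hs := [:: (fun zs => nth 0 zs 0); (fun zs => nth 0 zs 1)])
   tot_zero (tot_ifz HR (tot_proj 1) HR) (tot_S1 (tot_proj 0)) (conj (tot_proj 0) (conj (tot_proj 1) I)).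
apply: tot_ext Ht _ => ys.
set STEP := (X in primF _ X _ _).
have key : forall j, primF (fun _ => 0) STEP j [:: nth 0 ys 0; nth 0 ys 1]
   = bestv (fun s => E (nth 0 ys 0) (nth 0 ys 1) s) j.
  by elim=> //= j IH; rewrite IH.
exact: key.
Qed.

Definition Hprog := ifz Gprog (cst 1) rZero.
Lemma tot_Hprog : tot Hprog (fun ys => if gv (nth 0 ys 1) (nth 0 ys 0) is 0 then 1 else 0).
Proof. exact: tot_ifz tot_Gprog (tot_cst 1) tot_zero. Qed.

Definition Zprog := rMu Hprog.
Lemma Zprog_eval a xs v : eval Zprog (a :: xs) v <-> (0 < gv a v /\ forall m, m < v -> gv a m = 0).
Proof.
split.
- case/inv_mu => H0 H1; split.
    have := eval_det H0 (tot_Hprog _); rewrite /=; by case: (gv a v).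
  move=> m Hm; case: (H1 m Hm) => w Hw.
  have := eval_det Hw (tot_Hprog _); rewrite /=; by case: (gv a m).
- case=> H0 H1; constructor.
    have := tot_Hprog [:: v, a & xs]; rewrite /=; by case: (gv a v) H0.
  move=> m Hm; exists 0; have := tot_Hprog [:: m, a & xs]; by rewrite /= H1.
Qed.

Definition plusc x y := rComp (rPrim (rProj 0) (S1 (rProj 1))) [:: x; y].
Definition Pprog := predc (rComp Gprog [:: plusc Zprog (rProj 1); rProj 0]).

Lemma evals2 g1 g2 xs ys : evals [:: g1; g2] xs ys ->
  exists y1 y2, [/\ ys = [:: y1; y2], eval g1 xs y1 & eval g2 xs y2].
Proof.
case/inv_evals_cons => y1 [ys1 [-> [H1 /inv_evals_cons [y2 [ys2 [-> [H2 /inv_evals_nil ->]]]]]]].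
by exists y1, y2.
Qed.

Lemma Pprog_eval a t n : eval Pprog [:: a; t] n <->
  exists k0, [/\ 0 < gv a k0, (forall m, m < k0 -> gv a m = 0) & n = (gv a (k0 + t)).-1].
Proof.
split.
- case/inv_comp => ys [/inv_evals_cons [y [ys' [-> [Hy /inv_evals_nil ->]]]] Hp].
  have := eval_det Hp (eval_primF tot_zero (tot_proj 0) y [::]) => ->.
  case/inv_comp: Hy => ys2 [/evals2 [y1 [y2 [-> Hy1 Hy2]]] HG].
  have := eval_det HG (tot_Gprog _) => ->.
  have := eval_det Hy2 (tot_proj 0 _) => -> /=.
  case/inv_comp: Hy1 => zs [/evals2 [z1 [z2 [-> Hz1 Hz2]]] Hpl].
  have := eval_det Hpl (eval_primF (tot_proj 0) (tot_S1 (tot_proj 1)) z1 [:: z2]) => ->.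
  have := eval_det Hz2 (tot_proj 1 _) => -> /=.
  case/Zprog_eval: Hz1 => H0 H1; exists z1; split=> //.
  have -> : primF (fun xs => nth 0 xs 0) (fun xs => (nth 0 xs 1).+1) z1 [:: t] = z1 + t.
    by elim: z1 {H0 H1 Hpl} => //= z IH; rewrite IH.
  by case: (gv a (z1 + t)).
- case=> k0 [H0 H1 ->].
  apply: (eComp (ys := [:: gv a (k0 + t)])); last first.
    by have := eval_primF tot_zero (tot_proj 0) (gv a (k0 + t)) [::]; case: (gv a (k0 + t)).
  constructor; last constructor.
  apply: (eComp (ys := [:: k0 + t; a])); last exact: tot_Gprog.
  constructor; last by constructor; [exact: (tot_proj 0 [:: a; t]) | constructor].
  apply: (eComp (ys := [:: k0; t])).
    constructor; first exact/Zprog_eval.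
    by constructor; [exact: (tot_proj 1 [:: a; t]) | constructor].
  have := eval_primF (tot_proj 0) (tot_S1 (tot_proj 1)) k0 [:: t].
  suff -> : primF (fun xs => nth 0 xs 0) (fun xs => (nth 0 xs 1).+1) k0 [:: t] = k0 + t by [].
  by elim: k0 {H0 H1} => //= z IH; rewrite IH.
Qed.

End Top.

From Stdlib Require Import ClassicalEpsilon FunctionalExtensionality.

Section Sem.
Variables (c : bcomp) (cs : seq bcomp) (D : Type) (lt : D -> D -> Prop) (rho : nat -> D).
Hypotheses (irr : forall x, ~ lt x x) (trn : forall x y z, lt x y -> lt y z -> lt x z)
  (rhob : bijective rho).
Variables (p : rec) (f : btype c cs -> nat -> option D).
Hypothesis Hp : forall x t n, eval p [:: bcode x; t] n <-> f x t = Some (rho n).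
Hypothesis Hmono : mono2 lt f.

Lemma leD_antisym d e : leD lt d e -> leD lt e d -> d = e.
Proof. case=> [H1 [H2|->]|->] //; by case: (irr (trn H1 H2)). Qed.
Lemma leD_trans d e g : leD lt d e -> leD lt e g -> leD lt d g.
Proof. case=> [H1 [H2|<-]|->] //; [left; exact: trn H1 H2 | by left]. Qed.
Lemma rho_inj : injective rho.
Proof. exact: bij_inj. Qed.
Lemma rho_surj d : exists n, d = rho n.
Proof. case: rhob => g _ H; by exists (g d). Qed.

Definition Zx (x : btype c cs) := exists k, 0 < gv p (bcode x) k.

Definition fp (x : btype c cs) t : option D :=
  match excluded_middle_informative (Zx x) with
  | left H => Some (rho (gv p (bcode x) (ex_minn H + t)).-1)
  | right _ => None end.

Lemma minP (x : btype c cs) (H : Zx x) k0 :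
  (0 < gv p (bcode x) k0 /\ forall m, m < k0 -> gv p (bcode x) m = 0) <-> k0 = ex_minn H.
Proof.
case: ex_minnP => m Pm Hmin; split.
- case=> H0 H1; apply/eqP; rewrite eqn_leq Hmin // andbT leqNgt; apply/negP => Hlt.
  by move: Pm; rewrite H1.
- move=> ->; split=> // j Hj; move: (Hmin j); case: (gv _ _ j) => // w /(_ isT).
  by rewrite leqNgt Hj.
Qed.

Lemma stage (x : btype c cs) K v : gv p (bcode x) K = v.+1 -> exists s, [/\ s <= K, run K p [:: bcode x; s] = Some v,
  f x s = Some (rho v) & forall s' w, s' <= K -> run K p [:: bcode x; s'] = Some w -> s' <= s].
Proof.
case/gbest => s [H1 H2 H3]; exists s; split=> //; apply/Hp; exact: run_sound H2.
Qed.

Lemma catch (x : btype c cs) K s w : s <= K -> run K p [:: bcode x; s] = Some w ->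
  exists v, gv p (bcode x) K = v.+1 /\ leD lt (rho w) (rho v).
Proof.
move=> Hs Hw; case: (gpos Hs Hw) => v Hv; exists v; split=> //.
case: (stage Hv) => s' [H1 H2 H3 H4].
apply: (Hmono (t := s) (t' := s')); [exact: H4 Hw | apply/Hp; exact: run_sound Hw | exact: H3].
Qed.

Lemma Zpos (x : btype c cs) (H : Zx x) K : ex_minn H <= K -> exists v, gv p (bcode x) K = v.+1.
Proof.
move=> HK; case: ex_minnP HK => m Pm _ HK.
case E: (gv _ _ m) Pm => [|v] // _.
case: (stage E) => s [H1 H2 H3 H4].
case: (catch (K := K) (leq_trans H1 HK) (run_mono HK H2)) => v' [Hv' _]; eauto.
Qed.

Lemma R1 (x : btype c cs) t e : fp x t = Some e -> exists s, f x s = Some e.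
Proof.
rewrite /fp; case: excluded_middle_informative => // H [<-].
case: (@Zpos x H (ex_minn H + t) (leq_addr t _)) => v Hv.
case: (stage Hv) => s [_ _ Hs _]; exists s; by rewrite Hv.
Qed.

Lemma R2 (x : btype c cs) s e t0 : f x s = Some e ->
  exists t e', [/\ t0 <= t, fp x t = Some e' & leD lt e e'].
Proof.
case: (rho_surj e) => w -> /Hp Hw; case: (run_complete Hw) => k1 Hk1.
have HZ : Zx x.
  case: (gpos (leq_maxr k1 s) (run_mono (leq_maxl k1 s) Hk1)) => v Hv.
  by exists (maxn k1 s); rewrite Hv.
exists (maxn t0 (maxn k1 s)).
rewrite /fp; case: excluded_middle_informative => [H|//].
have HsK : s <= ex_minn H + maxn t0 (maxn k1 s).
  apply: leq_trans (leq_addl _ _); apply: leq_trans (leq_maxr _ _); exact: leq_maxr.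
have Hk1K : k1 <= ex_minn H + maxn t0 (maxn k1 s).
  apply: leq_trans (leq_addl _ _); apply: leq_trans (leq_maxr _ _); exact: leq_maxl.
case: (catch HsK (run_mono Hk1K Hk1)) => v [Hv Hle]; exists (rho v); rewrite Hv; split=> //.
exact: leq_maxl.
Qed.

Lemma fp_mono : mono2 lt fp.
Proof.
move=> x t t' d d' Htt'; rewrite /fp; case: excluded_middle_informative => [H|//] [<-] [<-].
case: (@Zpos x H (ex_minn H + t) (leq_addr t _)) => v Hv.
case: (stage Hv) => s [H1 H2 H3 H4].
have Hs' : s <= ex_minn H + t' by apply: leq_trans H1 _; rewrite leq_add2l.
have Hk : ex_minn H + t <= ex_minn H + t' by rewrite leq_add2l.
case: (catch Hs' (run_mono Hk H2)) => v' [Hv' Hle].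
by rewrite Hv Hv'.
Qed.

Lemma fp_dom (x : btype c cs) t : fp x t <> None <-> Zx x.
Proof. by rewrite /fp; case: excluded_middle_informative. Qed.

Lemma f_Z (x : btype c cs) s e : f x s = Some e -> Zx x.
Proof. move/(R2 0) => [t [e' [_ Ht _]]]; apply/(fp_dom x t); by rewrite Ht. Qed.

Lemma fp_comp (x : btype c cs) t n : eval (Pprog p) [:: bcode x; t] n <-> fp x t = Some (rho n).
Proof.
rewrite Pprog_eval /fp.
case: excluded_middle_informative => [H|nH]; split.
- by case=> k0 [H0 H1 ->]; rewrite ((minP H k0).1 (conj H0 H1)).
- case=> /rho_inj <-; exists (ex_minn H); have [H0 H1] := (minP H (ex_minn H)).2 erefl.
  by split.
- by case=> k0 [H0 _ _]; case: nH; exists k0.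
- by [].
Qed.

Lemma Z_sigma : sigma01 Zx.
Proof.
exists (Zprog p) => x; split.
- move=> H; exists (ex_minn H); apply/Zprog_eval; exact: (minP H _).2 erefl.
- by case=> v /Zprog_eval [H0 _]; exists v.
Qed.

Lemma inl_pmap (x : btype c cs) (l : seq nat) s e : s \in l -> f x s = Some e -> inl e (pmap (f x) l).
Proof.
elim: l => //= a l IH; rewrite in_cons => /orP [/eqP <-|Hs] He.
  by rewrite He /=; left.
case: (f x a) => [y|] /=; last exact: IH.
by right; exact: IH.
Qed.

Lemma fp_max F : is_maxD lt f F -> is_maxD lt fp F.
Proof.
move=> HF x d; rewrite HF; split.
- case=> [[l Hl] [s Hs] Hmax]; split.
  + by exists l => e [t Ht]; apply: Hl; exact: R1 Ht.
  + case: (R2 0 Hs) => t [e' [_ Ht Hle]]; have [s' Hs'] := R1 Ht.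
    have Hle' := Hmax e' (ex_intro _ s' Hs').
    by exists t; rewrite Ht (leD_antisym Hle Hle').
  + by move=> e [t Ht]; apply: Hmax; exact: R1 Ht.
- case=> [_ [t0 Ht0] Hmax]; have [S HS] := R1 Ht0; split.
  + exists (pmap (f x) (iota 0 S.+1)) => e [s Hs].
    case: (leqP s S) => HsS.
      by apply: (inl_pmap (s := s)) => //; rewrite mem_iota add0n ltnS.
    case: (R2 0 Hs) => t [e' [_ Ht Hle]].
    have Hed : leD lt e d := leD_trans Hle (Hmax _ (ex_intro _ t Ht)).
    have Hde : leD lt d e := Hmono (ltnW HsS) HS Hs.
    rewrite (leD_antisym Hed Hde).
    by apply: (inl_pmap (s := S) _ HS); rewrite mem_iota add0n ltnSn.
  + by exists S.
  + move=> e [s Hs]; case: (R2 0 Hs) => t [e' [_ Ht Hle]].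
    exact: leD_trans Hle (Hmax _ (ex_intro _ t Ht)).
Qed.

End Sem.


Theorem mainTheorem14 (c : bcomp) (cs : seq bcomp)
  (D : Type) (lt : D -> D -> Prop) (rho : nat -> D) :
  is_comp_poset lt rho ->
  forall F : btype c cs -> option D, MaxPR lt rho F ->
  (exists (f : btype c cs -> nat -> option D) (Z : btype c cs -> Prop),
     [/\ pcomp2 rho f, mono2 lt f, is_maxD lt f F, sigma01 Z &
         forall x t, f x t <> None <-> Z x])
  /\
  (sigma01 (fun x : btype c cs => F x <> None) ->
   exists f : btype c cs -> nat -> option D,
     [/\ pcomp2 rho f, mono2 lt f, is_maxD lt f F &
         forall x t, f x t <> None <-> F x <> None]).
Proof.
case=> irr trn rhob _ F [f [[p Hp] Hmono HF]].
have Hp' : forall (x : btype c cs) t n, eval p [:: bcode x; t] n <-> f x t = Some (rho n) := Hp.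
have Hmax := fp_max irr trn rhob Hp' Hmono HF.
split.
  exists (fp rho p), (Zx p); split.
  - by exists (Pprog p); exact: fp_comp.
  - exact: fp_mono Hp' Hmono.
  - exact: Hmax.
  - exact: Z_sigma.
  - exact: fp_dom.
case=> q Hq.
pose g := fun x t => if excluded_middle_informative (F x <> None) then fp rho p x t else None.
exists g; split.
- exists (rComp (rProj 0) [:: Pprog p; rComp q [:: rProj 0]]) => x t n; split.
  + case/inv_comp => ys [/evals2 [y1 [y2 [-> H1 H2]]] H3].
    have := inv_proj H3 => /= ->.
    case/inv_comp: H2 => zs [/inv_evals_cons [z [zs' [-> [Hz /inv_evals_nil ->]]]] Hq2].
    rewrite (inv_proj Hz) /= in Hq2.
    rewrite /g; destruct (excluded_middle_informative (F x <> None)) as [HFx0|nF].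
      exact: (proj1 (fp_comp rhob p x t y1) H1).
    by case: nF; apply/Hq; exists y2.
  + rewrite /g; destruct (excluded_middle_informative (F x <> None)) as [HFx|nF] => // Hn.
    have [v Hv] := (Hq x).1 HFx.
    apply: (eComp (ys := [:: n; v])); last by constructor.
    constructor; first exact: (proj2 (fp_comp rhob p x t n) Hn).
    constructor; last constructor.
    apply: (eComp (ys := [:: bcode x])) => //.
    by constructor; [exact: (tot_proj 0 [:: bcode x; t]) | constructor].
- move=> x t t' d d'; rewrite /g; destruct (excluded_middle_informative (F x <> None)) => //.
  exact: (fp_mono Hp' Hmono).
- move=> x d.
  have gE : forall t, g x t = if excluded_middle_informative (F x <> None) then fp rho p x t else None by [].
  destruct (excluded_middle_informative (F x <> None)) as [HFx0|nF].
    have E : g x = fp rho p x by apply: functional_extensionality => t; rewrite gE.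
    by rewrite /vals E; exact: Hmax.
  split; first by move=> Hd; exfalso; apply nF; rewrite Hd.
  by case=> _ [t]; rewrite gE.
- move=> x t; rewrite /g; destruct (excluded_middle_informative (F x <> None)) as [HFx|nF]; last by [].
  split=> // _; apply/(fp_dom rho p x t).
  case E: (F x) HFx => [d|] // _.
  case/HF: E => _ [s Hs] _; exact: (f_Z rhob Hp' Hmono Hs).
Qed.
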